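(* Let $\Omega\subset\mathbb{R}^n$ ($n\ge1$) be a bounded domain, $T>0$, $\delta\in(0,1)\cup(1,2)$, $\bar Q:=\bar\Omega\times[0,T]$ and $Q:=\Omega\times(0,T]$. Let $u$ be a classical solution of the initial-boundary value problem described in the context, and suppose $u\in C^{2,\bar\delta}(\bar Q)$. Then the initial value $\phi_0$ satisfies $L_0\phi_0(x)=f(x,0)$ for all $x\in\Omega$, where \[ L_0w(x):=-\sum_{i,j=1}^n p_{ij}(x,0)\frac{\partial^2 w}{\partial x_i\partial x_j}(x)+\sum_{i=1}^n q_i(x,0)\frac{\partial w}{\partial x_i}(x)+r(x,0)w(x). \]
   Context: Set $\bar\delta=1$ if $0<\delta<1$ and $\bar\delta=2$ if $1<\delta<2$. The Caputo fractional derivative is \[ D_t^\delta g(x,t):=\frac{1}{\Gamma(\bar\delta-\delta)}\int_0^t (t-s)^{\bar\delta-\delta-1}\,\frac{\partial^{\bar\delta}g(x,s)}{\partial s^{\bar\delta}}\,ds,\qquad x\in\Omega,\ 0<t\le T. \] The problem is: $D_t^\delta u-\sum_{i,j=1}^n p_{ij}(x,t)\,\partial^2u/\partial x_i\partial x_j+\sum_{i=1}^n q_i(x,t)\,\partial u/\partial x_i+r(x,t)u=f(x,t)$ for $(x,t)\in Q$; $u(x,t)=\psi(x,t)$ for $(x,t)\in\partial\Omega\times(0,T]$; $u(x,0)=\phi_0(x)$ for $x\in\bar\Omega$; and, only when $1<\delta<2$, $u_t(x,0)=\phi_1(x)$ for $x\in\Omega$. The spatial operator is uniformly elliptic on $Q$;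 $p_{ij},q_i,r,\psi,\phi_0,\phi_1$ are continuous on the closures of their domains; $f$ is continuous on $\bar Q$; and $\phi_0(x)=\psi(x,0)$ for all $x\in\partial\Omega$. A classical solution is a function $u$ continuous on $\bar Q$ for which $D_t^\delta u$, $\partial u/\partial x_i$, $\partial^2u/\partial x_i\partial x_j$ exist at every point of $Q$ and the equation and conditions hold pointwise. $C^{2,\bar\delta}(\bar Q)$ denotes the set of $w\in C(\bar Q)$ such that $\partial w/\partial x_i$, $\partial^2w/\partial x_i\partial x_j$ ($1\le i,j\le n$) and $\partial^k w/\partial t^k$ for $k=1,\bar\delta$ all lie in $C(\bar Q)$. *)

(* Defs.v *)
From HB Require Import structures.
From mathcomp Require Import all_boot all_order all_algebra.
From mathcomp Require Import all_classical all_reals all_analysis.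
Set Implicit Arguments. Unset Strict Implicit. Unset Printing Implicit Defensive.
Import Order.TTheory GRing.Theory Num.Theory.
Import numFieldNormedType.Exports.
Local Open Scope classical_set_scope.
Local Open Scope ring_scope.

Section Defs.
Variable R : realType.
Variable n : nat.

Definition evec (i : 'I_n) : 'rV[R]_n := delta_mx 0 i.

Definition Gammaf (z : R) : R :=
  Rintegral lebesgue_measure `]0%R, +oo[ (fun s : R => s `^ (z - 1) * expR (- s)).

Definition dbar (delta : R) : nat := if delta < 1 then 1%N else 2%N.

Fixpoint tder (k : nat) (g : R -> R) : R -> R :=
  match k with O => g | S k' => derive1 (tder k' g) end.

Definition Qbar (Om : set 'rV[R]_n) (T : R) : set ('rV[R]_n * R) :=
  [set z | closure Om z.1 /\ 0 <= z.2 <= T].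

(* lateral closure  boundary(Omega) x [0,T]  (Omega open, so boundary = closure \ Omega) *)
Definition Sbar (Om : set 'rV[R]_n) (T : R) : set ('rV[R]_n * R) :=
  [set z | (closure Om `\` Om) z.1 /\ 0 <= z.2 <= T].

Definition uncurry2 (w : 'rV[R]_n -> R -> R) : 'rV[R]_n * R -> R :=
  fun z => w z.1 z.2.

Definition dx (w : 'rV[R]_n -> R -> R) (i : 'I_n) (x : 'rV[R]_n) (t : R) : R :=
  'D_(evec i) (fun y => w y t) x.
Definition dxx (w : 'rV[R]_n -> R -> R) (i j : 'I_n) (x : 'rV[R]_n) (t : R) : R :=
  'D_(evec i) (fun y => dx w j y t) x.

Definition dx_exists (w : 'rV[R]_n -> R -> R) (i : 'I_n) (x : 'rV[R]_n) (t : R) :=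
  derivable (fun y => w y t) x (evec i).
Definition dxx_exists (w : 'rV[R]_n -> R -> R) (i j : 'I_n) (x : 'rV[R]_n) (t : R) :=
  derivable (fun y => dx w j y t) x (evec i).

Definition caputo_integrand (delta : R) (g : R -> R) (t : R) : R -> R :=
  fun s => (t - s) `^ ((dbar delta)%:R - delta - 1) * tder (dbar delta) g s.

Definition caputo (delta : R) (w : 'rV[R]_n -> R -> R) (x : 'rV[R]_n) (t : R) : R :=
  (Gammaf ((dbar delta)%:R - delta))^-1 *
  Rintegral lebesgue_measure `]0%R, t[ (caputo_integrand delta (w x) t).

Definition caputo_exists (delta : R) (w : 'rV[R]_n -> R -> R) (x : 'rV[R]_n) (t : R) :=
  (forall k : nat, (k < dbar delta)%N -> forall s, 0 < s < t ->
      derivable (tder k (w x)) s 1) /\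
  lebesgue_measure.-integrable `]0%R, t[ (EFin \o caputo_integrand delta (w x) t).

Definition Lop (p : 'I_n -> 'I_n -> 'rV[R]_n -> R -> R) (q : 'I_n -> 'rV[R]_n -> R -> R)
  (r : 'rV[R]_n -> R -> R) (w : 'rV[R]_n -> R -> R) (x : 'rV[R]_n) (t : R) : R :=
  - (\sum_(i < n) \sum_(j < n) p i j x t * dxx w i j x t)
  + \sum_(i < n) q i x t * dx w i x t + r x t * w x t.

Definition L0 (p : 'I_n -> 'I_n -> 'rV[R]_n -> R -> R) (q : 'I_n -> 'rV[R]_n -> R -> R)
  (r : 'rV[R]_n -> R -> R) (w : 'rV[R]_n -> R) (x : 'rV[R]_n) : R :=
  - (\sum_(i < n) \sum_(j < n) p i j x 0 * 'D_(evec i) ('D_(evec j) w) x)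
  + \sum_(i < n) q i x 0 * 'D_(evec i) w x + r x 0 * w x.

(* C^{2,dbar}(Qbar): w continuous on Qbar; the spatial derivatives
   dw/dx_i, d2w/dx_i dx_j exist at every (x,t) with x in Omega, 0<=t<=T,
   and the time derivatives d^k w/dt^k (k = 1, dbar) exist at every interior
   point (x,t), x in Omega, 0<t<T; each of them coincides there with a
   function continuous on Qbar (i.e. extends continuously to Qbar). *)
Definition C2dbar (Om : set 'rV[R]_n) (T delta : R) (w : 'rV[R]_n -> R -> R) :=
  {within Qbar Om T, continuous (uncurry2 w)} /\
  (forall i : 'I_n, exists g : 'rV[R]_n * R -> R,
     {within Qbar Om T, continuous g} /\
     forall x t, Om x -> 0 <= t <= T -> dx_exists w i x t /\ dx w i x t = g (x, t)) /\
  (forall i j : 'I_n, exists g : 'rV[R]_n * R -> R,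
     {within Qbar Om T, continuous g} /\
     forall x t, Om x -> 0 <= t <= T ->
       dx_exists w j x t /\ dxx_exists w i j x t /\ dxx w i j x t = g (x, t)) /\
  (forall k : nat, (1 <= k <= dbar delta)%N -> exists g : 'rV[R]_n * R -> R,
     {within Qbar Om T, continuous g} /\
     forall x t, Om x -> 0 < t < T ->
       (forall m, (m < k)%N -> derivable (tder m (w x)) t 1) /\ tder k (w x) t = g (x, t)).

Definition classical_solution (Om : set 'rV[R]_n) (T delta : R)
  (p : 'I_n -> 'I_n -> 'rV[R]_n -> R -> R) (q : 'I_n -> 'rV[R]_n -> R -> R)
  (r f psi : 'rV[R]_n -> R -> R) (phi0 phi1 : 'rV[R]_n -> R)
  (u : 'rV[R]_n -> R -> R) :=
  {within Qbar Om T, continuous (uncurry2 u)} /\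
  (forall x t, Om x -> 0 < t <= T ->
     caputo_exists delta u x t /\
     (forall i, dx_exists u i x t) /\
     (forall i j, dx_exists u j x t /\ dxx_exists u i j x t) /\
     caputo delta u x t + Lop p q r u x t = f x t) /\
  (forall x t, (closure Om `\` Om) x -> 0 < t <= T -> u x t = psi x t) /\
  (forall x, closure Om x -> u x 0 = phi0 x) /\
  (1 < delta -> forall x, Om x ->
     (fun h => (u x h - u x 0) / h) @ 0^'+ --> phi1 x).
End Defs.

(* Main.v *)
Require Import Defs.
From HB Require Import structures.
From mathcomp Require Import all_boot all_order all_algebra.
From mathcomp Require Import all_classical all_reals all_analysis.
From mathcomp Require Import measurable_realfun.
From mathcomp Require Import ring lra.
Import Order.TTheory GRing.Theory Num.Theory.
Import numFieldNormedType.Exports.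
Local Open Scope classical_set_scope.
Local Open Scope ring_scope.
Section S.
Variable R : realType.
Local Notation mu := (@lebesgue_measure R).

Lemma dpow (b t s : R) : s < t ->
  is_derive s 1 (fun s => (t - s) `^ b) (b * (t - s) `^ (b - 1) * -1).
Proof.
move=> st.
have h1 : is_derive s 1 (fun s => t - s) (-1).
  have -> : (fun s => t - s) = cst t - id by [].
  by apply: is_derive_eq; rewrite sub0r.
have h2 : is_derive (t - s) 1 (fun x : R => x `^ b) (b * (t - s) `^ (b - 1)).
  by apply: (@is_derive1_powR R); rewrite subr_gt0.
exact: (@is_derive1_comp R (fun x => x `^ b) (fun s => t - s) s _ _ h2 h1).
Qed.

Lemma pow_int (t a : R) : 0 < t -> 0 < a ->
  (\int[mu]_(s in `]0%R, t[) ((t - s) `^ (a - 1))%:E <= (t `^ a / a)%:E)%E.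
Proof.
move=> t0 a0.
set f := fun s => (t - s) `^ (a - 1).
have mf : measurable_fun [set: R] (EFin \o f).
  apply/measurable_EFinP.
  have := measurableT_comp (@measurable_powR R (a - 1)) (measurable_funB (measurable_cst t) (@measurable_id _ R setT)).
  exact.
pose c (k : nat) := t - t / k.+2%:R.
pose F k : set R := [set` `[0, c k]].
have cpos k : 0 < c k.
  rewrite /c subr_gt0 ltr_pdivrMr ?ltr0n// ltr_pMr// ltr1n//.
have clt k : c k < t.
  by rewrite /c ltrBlDr ltrDl divr_gt0// ltr0n.
have nd : nondecreasing_seq F.
  apply/nondecreasing_seqP => k. rewrite subsetEset; apply: subset_itvl; rewrite bnd_simp.
  rewrite /c; apply: lerB => //.
  by rewrite ler_pM2l // lef_pV2 ?posrE ?ltr0n // ler_nat.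
have cup : \bigcup_k F k = `[0, t[%classic.
  apply/seteqP; split => s /=.
    move=> [k _]; rewrite /F /= !in_itv /= => /andP[s0 sc].
    by rewrite s0 /=; exact: le_lt_trans sc (clt k).
  rewrite in_itv /= => /andP[s0 st].
  have ts : 0 < t - s by rewrite subr_gt0.
  have [k hk] : exists k : nat, t / (t - s) < k%:R.
    exists (Num.bound (t / (t - s))); apply: archi_boundP.
    by rewrite divr_ge0 // ltW.
  exists k => //; rewrite /F /= in_itv /= s0 /=.
  have hk' : t < k%:R * (t - s) by rewrite -ltr_pdivrMr.
  have h : t / k.+2%:R <= t - s.
    rewrite ler_pdivrMr ?ltr0n // -addn2 natrD.
    have -> : (t - s) * (k%:R + 2%:R) = k%:R * (t - s) + 2 * (t - s) by ring.
    lra.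
  rewrite /c; move: h; set d := t / k.+2%:R; move=> h; lra.
have mF k : measurable (F k) by rewrite /F.
have mfF k : measurable_fun (F k) (EFin \o f) by exact: measurable_funS mf.
have f0 k s : F k s -> (0 <= (EFin \o f) s)%E by move=> _; rewrite /= lee_fin powR_ge0.
apply: (@le_trans _ _ (\int[mu]_(s in `[0%R, t[) (EFin \o f) s)%E).
  apply: ge0_subset_integral => //.
  - exact: measurable_funS mf.
  - by move=> s _; rewrite lee_fin powR_ge0.
  - by apply: subset_itvr; rewrite bnd_simp.
rewrite -cup.
have := @ge0_nondecreasing_set_cvg_integral _ (measurableTypeR R) R F (EFin \o f) mu nd mF mfF f0.
move=> /cvge_to_le; apply.
apply: nearW => k.
have ck := cpos k; have ckt := clt k.
pose G s := - (a^-1 * (t - s) `^ a).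
have Gd s : s < t -> is_derive s 1 G (f s).
  move=> st; have h := is_deriveN (is_deriveZ a^-1 (@dpow a t s st)).
  apply: (is_derive_eq h).
  rewrite /f /= -[_ *: _]/(_ * _); field.
  by rewrite gt_eqF.
have fd s : s < t -> derivable f s 1 by move=> st; by case: (@dpow (a - 1) t s st).
have FTC : (\int[mu]_(x in `[0%R, c k]) (f x)%:E = (G (c k))%:E - (G 0)%:E)%E.
  apply: continuous_FTC2 => //.
  - apply: derivable_within_continuous => s; rewrite in_itv /= => /andP[_ sc].
    exact/fd/(le_lt_trans sc).
  - split.
    + move=> s; rewrite in_itv /= => /andP[_ sc].
      by case: (Gd s (lt_trans sc ckt)).
    + apply: cvg_at_right_filter.
      by apply/differentiable_continuous/derivable1_diffP; case: (Gd 0 t0).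
    + apply: cvg_at_left_filter.
      by apply/differentiable_continuous/derivable1_diffP; case: (Gd _ ckt).
  - move=> s; rewrite in_itv /= => /andP[_ sc].
    by case: (Gd s (lt_trans sc ckt)) => _; rewrite derive1E.
rewrite [X in (X <= _)%E](_ : _ = \int[mu]_(x in `[0%R, c k]) (f x)%:E)%E//.
rewrite FTC -EFinB lee_fin /G subr0.
have hX : 0 <= a^-1 * (t - c k) `^ a by rewrite mulr_ge0 ?invr_ge0 ?powR_ge0 ?ltW.
rewrite [_ / a]mulrC; lra.
Qed.

Lemma cap_bound (t a M : R) (h : R -> R) : 0 < t -> 0 < a -> 0 <= M ->
  mu.-integrable `]0%R, t[ (EFin \o (fun s => (t - s) `^ (a - 1) * h s)) ->
  (forall s, 0 < s < t -> `|h s| <= M) ->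
  `|Rintegral mu `]0%R, t[ (fun s => (t - s) `^ (a - 1) * h s)| <= M * (t `^ a / a).
Proof.
move=> t0 a0 M0 hint hb.
set ci := fun s => (t - s) `^ (a - 1) * h s.
have mD : measurable (`]0%R, t[ : set (measurableTypeR R)) by [].
have H := le_normr_Rintegral mD hint.
apply: (le_trans H).
have iabs := integrable_abse hint.
have le : (\int[mu]_(s in `]0%R, t[) (`|ci s|)%:E <= (M * (t `^ a / a))%:E)%E.
  apply: (@le_trans _ _ (\int[mu]_(s in `]0%R, t[) (M * (t - s) `^ (a - 1))%:E)%E).
    apply: ge0_le_integral.
    - exact: mD.
    - by move=> s _; rewrite lee_fin normr_ge0.
    - exact: (measurable_int mu iabs).
    - apply/measurable_EFinP; apply: measurable_funTS.
      apply: measurable_funM => //.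
      exact: (measurableT_comp (@measurable_powR R (a - 1)) (measurable_funB (measurable_cst t) (@measurable_id _ R setT))).
    - move=> s; rewrite /= in_itv /= => /andP[s0 st].
      rewrite lee_fin /ci normrM ger0_norm ?powR_ge0// [M * _]mulrC.
      by apply: ler_wpM2l; [exact: powR_ge0 | apply: hb; rewrite s0 st].
  under eq_integral do rewrite EFinM.
  have mpow : measurable_fun (`]0%R, t[ : set (measurableTypeR R)) (fun s => ((t - s) `^ (a - 1))%:E).
    apply/measurable_EFinP; apply: measurable_funTS.
    exact: (measurableT_comp (@measurable_powR R (a - 1)) (measurable_funB (measurable_cst t) (@measurable_id _ R setT))).
  rewrite ge0_integralZl //; last by move=> s _; rewrite lee_fin powR_ge0.
  rewrite EFinM; apply: lee_wpmul2l; first by rewrite lee_fin.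
  exact: pow_int.
have fin := integrable_fin_num mD iabs.
rewrite /Rintegral -lee_fin fineK //.
Qed.
End S.

Section T.
Variable R : realType.
Variable n : nat.

Lemma cont_path (h : 'rV[R]_n * R -> R) (Om : set 'rV[R]_n) T x :
  {within Qbar Om T, continuous h} -> closure Om x -> 0 < T ->
  h (x, t) @[t --> 0^'+] --> h (x, 0).
Proof.
move=> hc cx T0.
have := (@subspace_continuousP _ (Qbar Om T) _ h).1 hc (x, 0).
have Q0 : Qbar Om T (x, 0) by split => //=; rewrite lexx ltW.
move=> /(_ Q0) hlim.
apply: (cvg_comp _ _ _ hlim).
move=> P /= [e /= [/nbhs_singleton e1 e2] HP].
near=> t.
apply: HP.
  split => //.
  near: t => /=; apply: (@cvg_within _ (nbhs (0:R))); exact: e2.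
split => //=; apply/andP; split.
  by apply/ltW; near: t; exact: nbhs_right_gt.
by apply/ltW; near: t; exact: nbhs_right_lt.
Unshelve. all: end_near. Qed.


Lemma lim_of (Om : set 'rV[R]_n) T (g : 'rV[R]_n * R -> R) (w : R -> R) x :
  {within Qbar Om T, continuous g} -> closure Om x -> 0 < T ->
  (forall t, 0 <= t <= T -> w t = g (x, t)) -> w t @[t --> 0^'+] --> w 0.
Proof.
move=> gc cx T0 wg.
rewrite wg; last by rewrite lexx ltW.
apply: (cvg_trans _ (@cont_path g Om T x gc cx T0)).
apply: near_eq_cvg; near=> t; rewrite wg //; apply/andP; split.
  by apply/ltW; near: t; exact: nbhs_right_gt.
by apply/ltW; near: t; exact: nbhs_right_lt.
Unshelve. all: end_near. Qed.


Lemma cvg_sumI (m : nat) (F : set_system R) (FF : Filter F)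
  (Ff : 'I_m -> R -> R) (Fa : 'I_m -> R) :
  (forall i, Ff i t @[t --> F] --> Fa i) ->
  (\sum_(i < m) Ff i t) @[t --> F] --> \sum_(i < m) Fa i.
Proof.
move=> h; apply: cvg_big => //.
exact: add_continuous.
Qed.
End T.
Arguments cont_path {R n h Om T x}.
Arguments lim_of {R n Om T g w x}.

Theorem theorem2p3 (R : realType) (n : nat) (Om : set 'rV[R]_n) (T delta : R)
  (p : 'I_n -> 'I_n -> 'rV[R]_n -> R -> R) (q : 'I_n -> 'rV[R]_n -> R -> R)
  (r f psi : 'rV[R]_n -> R -> R) (phi0 phi1 : 'rV[R]_n -> R)
  (u : 'rV[R]_n -> R -> R) :
  (1 <= n)%N ->
  (* Omega is a bounded domain *)
  open Om -> connected Om -> Om !=set0 -> bounded_set Om ->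
  0 < T ->
  (0 < delta < 1 \/ 1 < delta < 2) ->
  (* uniform ellipticity on Q = Omega x (0,T] *)
  (exists2 lam : R, 0 < lam & forall x t, Om x -> 0 < t <= T ->
     forall xi : 'rV[R]_n,
       lam * (\sum_(i < n) xi 0 i ^+ 2) <=
       \sum_(i < n) \sum_(j < n) p i j x t * xi 0 i * xi 0 j) ->
  (* continuity of the data on the closures of their domains *)
  (forall i j, {within Qbar Om T, continuous (uncurry2 (p i j))}) ->
  (forall i, {within Qbar Om T, continuous (uncurry2 (q i))}) ->
  {within Qbar Om T, continuous (uncurry2 r)} ->
  {within Qbar Om T, continuous (uncurry2 f)} ->
  {within Sbar Om T, continuous (uncurry2 psi)} ->
  {within closure Om, continuous phi0} ->
  {within closure Om, continuous phi1} ->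
  (* compatibility condition *)
  (forall x, (closure Om `\` Om) x -> phi0 x = psi x 0) ->
  classical_solution Om T delta p q r f psi phi0 phi1 u ->
  C2dbar Om T delta u ->
  forall x, Om x -> L0 p q r phi0 x = f x 0.
Proof.
move=> n1 Omo Omc Omne Omb T0 hdel _ cp cq cr cf _ _ _ _ [cu [heq [_ [init _]]]]
  [_ [hdx [hdxx hdt]]] x Ox.
have cx : closure Om x by exact: subset_closure.
have nOm y : Om y -> \forall z \near y, Om z.
  by move=> Oy; exact: Omo.
have Dphi v y : Om y -> 'D_v (fun z => u z 0) y = 'D_v phi0 y.
  move=> Oy; apply: near_eq_derive; near=> z; apply: init; apply: subset_closure.
  by near: z; exact: nOm.
have dx0 i y : Om y -> dx u i y 0 = 'D_(evec R i) phi0 y.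
  by move=> Oy; exact: Dphi.
have dxx0 i j : dxx u i j x 0 = 'D_(evec R i) ('D_(evec R j) phi0) x.
  rewrite /dxx; apply: near_eq_derive; near=> z; apply: dx0.
  by near: z; exact: nOm.
have lim_u : u x t @[t --> 0^'+] --> phi0 x.
  by rewrite -(init x cx); have := cont_path cu cx T0; exact.
have lim_dx i : dx u i x t @[t --> 0^'+] --> 'D_(evec R i) phi0 x.
  have [g [gc gh]] := hdx i; rewrite -dx0 //.
  by apply: (lim_of gc cx T0) => t ht; exact: (gh x t Ox ht).2.
have lim_dxx i j : dxx u i j x t @[t --> 0^'+] --> 'D_(evec R i) ('D_(evec R j) phi0) x.
  have [g [gc gh]] := hdxx i j; rewrite -dxx0.
  by apply: (lim_of gc cx T0) => t ht; exact: (gh x t Ox ht).2.2.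
have lim_p i j : p i j x t @[t --> 0^'+] --> p i j x 0.
  by have := cont_path (cp i j) cx T0; exact.
have lim_q i : q i x t @[t --> 0^'+] --> q i x 0.
  by have := cont_path (cq i) cx T0; exact.
have lim_r : r x t @[t --> 0^'+] --> r x 0.
  by have := cont_path cr cx T0; exact.
have lim_f : f x t @[t --> 0^'+] --> f x 0.
  by have := cont_path cf cx T0; exact.
have lim_L : Lop p q r u x t @[t --> 0^'+] --> L0 p q r phi0 x.
  rewrite /Lop /L0; apply: cvgD; [apply: cvgD|].
  - apply: cvgN; apply: cvg_sumI => i; apply: cvg_sumI => j.
    by apply: cvgM; [exact: lim_p|exact: lim_dxx].
  - by apply: cvg_sumI => i; apply: cvgM; [exact: lim_q|exact: lim_dx].
  - by apply: cvgM; [exact: lim_r|exact: lim_u].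
have lim_C : caputo delta u x t @[t --> 0^'+] --> 0.
  rewrite /caputo.
  set k := dbar delta.
  set a := k%:R - delta.
  have a0 : 0 < a.
    rewrite /a /k /dbar; case: hdel => /andP[d0 d1].
      by rewrite d1; lra.
    have -> : (delta < 1) = false by apply/negbTE; rewrite -leNgt ltW.
    lra.
  have k1 : (0 < k <= k)%N by rewrite leqnn andbT /k /dbar; case: ifP.
  have [g [gc gh]] := hdt k k1.
  have lg := cont_path gc cx T0.
  set M := `|g (x, 0)| + 1.
  have M0 : 0 <= M by rewrite addr_ge0.
  have Hn := @cvgr_dist_le R R R _ _ (fun t => g (x, t)) (g (x, 0)) lg 1 ltr01.
  case: Hn => e /= e0 He.
  have gb s : 0 < s < e -> `|g (x, s)| <= M.
    move=> /andP[s0 se].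
    have hs : `|g (x, 0) - g (x, s)| <= 1.
      by apply: (He s) => //; rewrite /ball_ /= sub0r normrN gtr0_norm.
    have := ler_normB (g (x, 0)) (g (x, 0) - g (x, s)).
    have -> : g (x, 0) - (g (x, 0) - g (x, s)) = g (x, s) by ring.
    rewrite /M; lra.
  have HB : (fun t => M * (t `^ a * a^-1)) @ 0^'+ --> M * (0 * a^-1).
    apply: cvgM; first exact: cvg_cst.
    by apply: cvgM; [exact: powR_cvg0 | exact: cvg_cst].
  rewrite mul0r mulr0 in HB.
  have HNB : (fun t => - (M * (t `^ a * a^-1))) @ 0^'+ --> - 0 by exact: cvgN.
  rewrite oppr0 in HNB.
  have HI : (fun t => Rintegral lebesgue_measure `]0%R, t[ (caputo_integrand delta (u x) t))
      @ 0^'+ --> 0.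
    apply: (squeeze_cvgr _ HNB HB).
    near=> t.
    have t0 : 0 < t by near: t; exact: nbhs_right_gt.
    have tT : t < T by near: t; exact: nbhs_right_lt.
    have te : t < e by near: t; exact: nbhs_right_lt.
    have ht : 0 < t <= T by rewrite t0 ltW.
    have [[_ hint] _] := heq x t Ox ht.
    rewrite -ler_norml.
    apply: (@cap_bound R t a M (tder k (u x)) t0 a0 M0 hint).
    move=> s /andP[s0 st].
    have hsT : 0 < s < T by rewrite s0 (lt_trans st tT).
    rewrite (gh x s Ox hsT).2; apply: gb.
    by rewrite s0 (lt_trans st te).
  rewrite -[X in _ --> X](mulr0 (Gammaf a)^-1).
  by apply: cvgM; [exact: cvg_cst | exact: HI].
have lim_L2 : Lop p q r u x t @[t --> 0^'+] --> f x 0.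
  rewrite -[f x 0]subr0.
  apply: (cvg_trans _ (cvgB lim_f lim_C)).
  apply: near_eq_cvg; near=> t.
  have ht : 0 < t <= T.
    apply/andP; split; first by near: t; exact: nbhs_right_gt.
    by apply/ltW; near: t; exact: nbhs_right_lt.
  have [_ [_ [_ E]]] := heq x t Ox ht.
  by rewrite -[LHS]/(f x t - caputo delta u x t) -E addrC addKr.
exact: (cvg_unique (@Rhausdorff R) lim_L lim_L2).
Unshelve. all: end_near. Qed.
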